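(* $\mu(C(4,7))=3$.
   Context: For even $k$, the circulant $C(k,n)$ is the graph on vertex set $\{1,\dots,n\}$ in which distinct $i<j$ are adjacent iff $\min(j-i,\ i+n-j)\le k/2$. For a simple graph $G=(V,E)$ on $n$ vertices, a fractional vertex cover is a function $f:V\to[0,\infty)$ with $f(u)+f(v)\ge 1$ for every edge $uv$; $\tau^*(G)$ is the minimum of $\sum_v f(v)$ over these. For $E'\subseteq E$ let $G-E'=(V,E\setminus E')$, and $\mu(G)=\min\{|E'|: E'\subseteq E,\ \tau^*(G-E')<n/2\}$. *)

(* Defs.v *)
From HB Require Import structures.
From mathcomp Require Import all_boot all_order all_algebra.
From mathcomp Require Import boolp classical_sets reals.
Set Implicit Arguments. Unset Strict Implicit. Unset Printing Implicit Defensive.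
Import Order.TTheory GRing.Theory Num.Theory.
Local Open Scope ring_scope.


(* A simple graph on a finite vertex type T is given by its edge set:
   a set of 2-element subsets of T. *)

(* Circulant C(k,n): vertices 'I_n (vertex i stands for i+1 in {1..n});
   distinct i<j adjacent iff min(j-i, i+n-j) <= k/2. *)
Definition circulant (k n : nat) : {set {set 'I_n}} :=
  [set [set i; j] | i in 'I_n, j in 'I_n &
     (i < j)%N && (minn (j - i) (i + n - j) <= k./2)%N].

Definition frac_vcover (R : realType) (T : finType) (E : {set {set T}})
  (f : T -> R) : Prop :=
  (forall v, 0 <= f v) /\
  (forall u v : T, u != v -> [set u; v] \in E -> 1 <= f u + f v).

Definition tau_star (R : realType) (T : finType) (E : {set {set T}}) : R :=
  inf [set s | exists f : T -> R, frac_vcover E f /\ s = \sum_(v : T) f v]%classic.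

(* mu(G) = min { |E'| : E' subset of E, tau*(G - E') < n/2 }, n = |V|.
   (If no such E' existed, the value would default to |E|+1; irrelevant here.) *)
Definition mu (R : realType) (T : finType) (E : {set {set T}}) : nat :=
  \big[minn/#|E|.+1]_(E' : {set {set T}} |
      (E' \subset E) && `[< tau_star R (E :\: E') < (#|T|%:R / 2%:R) >])
    #|E'|.

(* Main.v *)
Require Import Defs.
From HB Require Import structures.
From mathcomp Require Import all_boot all_order all_algebra.
From mathcomp Require Import boolp classical_sets reals.
From mathcomp Require Import zify ring lra.
Set Implicit Arguments. Unset Strict Implicit. Unset Printing Implicit Defensive.
Import Order.TTheory GRing.Theory Num.Theory.

Definition certs : seq (seq (nat*nat)) :=
 [:: [:: (0, 1); (0, 6); (1, 2); (2, 4); (3, 4); (3, 5); (5, 6)];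
     [:: (0, 2); (0, 5); (1, 3); (1, 6); (2, 3); (4, 5); (4, 6)];
     [:: (0, 1); (0, 5); (1, 6); (2, 3); (2, 4); (3, 5); (4, 6)];
     [:: (0, 2); (0, 6); (1, 2); (1, 3); (3, 4); (4, 5); (5, 6)];
     [:: (0, 1); (0, 2); (1, 3); (2, 4); (3, 5); (4, 6); (5, 6)];
     [:: (0, 5); (0, 6); (1, 2); (1, 6); (2, 3); (3, 4); (4, 5)];
     [:: (0, 2); (0, 5); (1, 3); (1, 6); (2, 4); (3, 4); (5, 6)];
     [:: (0, 2); (0, 6); (1, 2); (1, 3); (3, 5); (4, 5); (4, 6)];
     [:: (0, 5); (0, 6); (1, 3); (1, 6); (2, 3); (2, 4); (4, 5)];
     [:: (0, 1); (0, 5); (1, 2); (2, 3); (3, 4); (4, 6); (5, 6)]].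

Definition avoid (o : option (nat * nat)) (e : nat * nat) : bool :=
  if o is Some p then p != e else true.
Definition opts : seq (option (nat*nat)) :=
  None :: [seq Some (i,j) | i <- iota 0 7, j <- iota 0 7].
Lemma cover_all : all (fun o1 => all (fun o2 =>
  has (fun c => all (fun e => avoid o1 e && avoid o2 e) c) certs) opts) opts.
Proof. by vm_compute. Qed.

Definition cnd (a b : nat) := (minn (b - a) (a + 7 - b) <= 2)%N.
Definition goode (e : nat * nat) : bool := [&& (e.1 < e.2)%N, (e.2 < 7)%N & cnd e.1 e.2].
Lemma certs_good : all (all goode) certs.
Proof. by vm_compute. Qed.

Lemma f0_ok : all (fun a => all (fun b => [==> (a < b)%N, cnd a b,
   (a, b) \notin [:: (0,1); (0,5); (4,5)] => (a \in [:: 2; 3; 6]) || (b \in [:: 2; 3; 6])])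
   (iota 0 7)) (iota 0 7).
Proof. by vm_compute. Qed.

Lemma uniq2 (i j u v : 'I_7) : (i < j)%N -> (u < v)%N -> [set i; j] = [set u; v] ->
  i = u /\ j = v.
Proof.
move=> ij uv H.
have Hi : i \in [set u; v] by rewrite -H !inE eqxx.
have Hj : j \in [set u; v] by rewrite -H !inE eqxx orbT.
have Hu : u \in [set i; j] by rewrite H !inE eqxx.
move: Hi Hj Hu; rewrite !inE => /orP[]/eqP E1 /orP[]/eqP E2 /orP[]/eqP E3; subst; try (split; done); lia.
Qed.

Lemma in_circ (i j : 'I_7) : (i < j)%N -> cnd i j -> [set i; j] \in circulant 4 7.
Proof.
move=> ij c; rewrite /circulant.
by apply/imset2P; exists i j => //; rewrite inE /= ij.
Qed.

Lemma circ_cnd (u v : 'I_7) : (u < v)%N -> [set u; v] \in circulant 4 7 -> cnd u v.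
Proof.
move=> uv /imset2P [i j _]; rewrite inE /= => /andP [ij c] E.
by have [<- <-] := uniq2 ij uv (esym E).
Qed.

Lemma card2ex (T : finType) (A : {set T}) (x0 : T) : (#|A| <= 2)%N ->
  exists a b, forall x, x \in A -> x = a \/ x = b.
Proof.
rewrite cardE => hs.
case E: (enum A) hs => [|a [|b [|c s]]] //= _.
- by exists x0, x0 => x; rewrite -mem_enum E.
- by exists a, a => x; rewrite -mem_enum E inE => /eqP; left.
- by exists a, b => x; rewrite -mem_enum E !inE => /orP[]/eqP; [left|right].
Qed.

Lemma toopt (e : {set 'I_7}) : exists o, o \in opts /\
  forall u v : 'I_7, (u < v)%N -> [set u; v] = e -> o = Some (val u, val v).
Proof.
case: (pselect (exists u v : 'I_7, (u < v)%N /\ [set u; v] = e)).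
- move=> [u [v [uv E]]]; exists (Some (val u, val v)); split.
    rewrite inE; apply/orP; right.
    apply: (allpairs_f (fun i j => Some (i, j))); by rewrite mem_iota /=.
  move=> u' v' uv' E'; rewrite -E' in E.
  by have [-> ->] := uniq2 uv uv' E.
- move=> N; exists None; split => // u v uv E; exfalso; apply: N; by exists u, v.
Qed.

Section S.
Variable R : realType.
Local Open Scope ring_scope.

Lemma sum7 (f : 'I_7 -> R) : \sum_(v : 'I_7) f v =
  f (inord 0) + f (inord 1) + f (inord 2) + f (inord 3) + f (inord 4) + f (inord 5) + f (inord 6).
Proof.
rewrite (eq_bigr (fun v : 'I_7 => f (inord v))); last by move=> v _; rewrite inord_val.
rewrite -(big_mkord xpredT (fun k => f (inord k))).
by rewrite unlock /= !addrA addr0.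
Qed.

Ltac use_edges H c := lazymatch c with
  | cons (?a, ?b) ?c' => have := H (a, b) isT; use_edges H c'
  | nil => idtac end.

Lemma cert_bound (f : 'I_7 -> R) c : c \in certs ->
  (forall e, e \in c -> 1 <= f (inord e.1) + f (inord e.2)) -> 7%:R / 2%:R <= \sum_v f v.
Proof.
rewrite sum7 !inE => Hc H.
repeat (case/orP: Hc => [/eqP Hc|Hc]; [subst c; 
   match type of H with forall e, is_true (e \in ?c) -> _ => use_edges H c end;
   rewrite /=; lra|]).
move/eqP: Hc => Hc; subst c;
   match type of H with forall e, is_true (e \in ?c) -> _ => use_edges H c end;
   rewrite /=; lra.
Qed.

Notation E := (circulant 4 7).

Lemma low (E' : {set {set 'I_7}}) : (#|E'| <= 2)%N ->
  7%:R / 2%:R <= tau_star R (E :\: E').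
Proof.
move=> hc; rewrite /tau_star; apply: lb_le_inf.
  exists (\sum_(v : 'I_7) (1 : R)), (fun _ => 1); split => //; split=> [v|u v _ _]; lra.
move=> y [f [[f0 fc] ->]].
have [e1 [e2 He]] := card2ex (@finset.set0 _) hc.
have [o1 [O1 H1]] := toopt e1.
have [o2 [O2 H2]] := toopt e2.
have /hasP [c Hc Ha] := allP (allP cover_all o1 O1) o2 O2.
apply: (cert_bound Hc) => e He0.
have /andP [ge1 /andP [ge2 ge3]] := allP (allP certs_good c Hc) e He0.
have g1 : (e.1 < 7)%N := ltn_trans ge1 ge2.
have k1 : (inord e.1 : 'I_7) = e.1 :> nat by rewrite inordK.
have k2 : (inord e.2 : 'I_7) = e.2 :> nat by rewrite inordK.
have uv : ((inord e.1 : 'I_7) < (inord e.2 : 'I_7))%N by rewrite k1 k2.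

apply: fc; first by rewrite neq_ltn uv.
rewrite inE in_circ ?k1 ?k2 // andbT.
apply/negP => /He [] Ee.
- have := H1 _ _ uv Ee; rewrite /= k1 k2 -surjective_pairing => Eo.
  by have := allP Ha e He0; rewrite Eo /= eqxx.
- have := H2 _ _ uv Ee; rewrite /= k1 k2 -surjective_pairing => Eo.
  by have := allP Ha e He0; rewrite Eo /= eqxx andbF.
Qed.

Definition E0 : {set {set 'I_7}} :=
  [set [set inord 0; inord 1]; [set inord 0; inord 5]; [set inord 4; inord 5]].

Definition f0 (v : 'I_7) : R := if (nat_of_ord v \in [:: 2; 3; 6]%N) then 1 else 0.

Lemma E0_sub : E0 \subset circulant 4 7.
Proof.
apply/fintype.subsetP => x; rewrite !inE => /orP [/orP [] /eqP -> | /eqP ->];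
  by apply: in_circ; rewrite /cnd !inordK.
Qed.

Lemma E0_card : (#|E0| <= 3)%N.
Proof. rewrite /E0 cardsU cards2 cards1; apply: leq_trans (leq_subr _ _) _; by case: (_ != _). Qed.

Lemma up : tau_star R (E :\: E0) < 7%:R / 2%:R.
Proof.
have cov : frac_vcover (E :\: E0) f0.
  split; first by move=> v; rewrite /f0; case: ifP => _; lra.
  move=> u v; wlog uv : u v / (u < v)%N => [W|].
    case: (ltngtP u v) => h.
    - exact: W.
    - by move=> nuv; rewrite finset.setUC addrC; apply: W; rewrite // eq_sym.
    - by rewrite (val_inj h) eqxx.
  move=> _; rewrite inE => /andP [nE0 inEE].
  have c := circ_cnd uv inEE.
  have nl : (nat_of_ord u, nat_of_ord v) \notin [:: (0,1); (0,5); (4,5)]%N.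
    apply/negP; rewrite !inE => /orP [/eqP [Eu Ev] | /orP [] /eqP [Eu Ev]]; move/negP: nE0; apply;
    (have -> : u = inord (nat_of_ord u) by rewrite inord_val);
    (have -> : v = inord (nat_of_ord v) by rewrite inord_val);
    by rewrite Eu Ev !inE eqxx ?orbT.
  have := allP (allP f0_ok u _) v _; rewrite uv c nl !mem_iota /= => /(_ (ltn_ord u) (ltn_ord v)).
  by move=> /orP [] H; rewrite /f0 H; case: ifP => _; lra.
have hlb : has_lbound [set s | exists f : 'I_7 -> R, frac_vcover (E :\: E0) f /\ s = \sum_(v : 'I_7) f v]%classic.
  exists 0 => y [f [[fp _] ->]]; exact: sumr_ge0.
have := ge_inf hlb (x := \sum_(v : 'I_7) f0 v) (ex_intro _ f0 (conj cov erefl)).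
rewrite /tau_star sum7 /f0 !inordK //=; lra.
Qed.
End S.

Lemma bigmin_le (I : finType) (P : pred I) (F : I -> nat) k x :
  P x -> (\big[minn/k]_(i | P i) F i <= F x)%N.
Proof.
move=> Px; have : x \in index_enum I := mem_index_enum x.
elim: (index_enum I) => // a s IH; rewrite inE big_cons => /orP [/eqP <-|xs].
  by rewrite Px geq_minl.
by case: (P a); [apply: leq_trans (geq_minr _ _) (IH xs)|apply: IH].
Qed.

Theorem lemma33 (R : realType) : mu R (circulant 4 7) = 3%N.
Proof.
rewrite /mu card_ord; apply/eqP; rewrite eqn_leq; apply/andP; split.
- apply: leq_trans (bigmin_le _ _ (x := E0) _) (E0_card).
  by rewrite E0_sub; apply/asboolP; apply: up.
- apply: (big_ind (fun x => 3 <= x)%N) => //.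
    have ab : [set inord 0; inord 1] != [set inord 0; inord 5] :> {set 'I_7}.
      apply/eqP => Eab.
      have : (inord 1 : 'I_7) \in [set inord 0; inord 5] by rewrite -Eab !inE eqxx orbT.
      by rewrite !inE -!val_eqE /= !inordK.
    have sub : [set [set inord 0; inord 1]; [set inord 0; inord 5]] \subset circulant 4 7.
      apply: fintype.subset_trans E0_sub; apply/fintype.subsetP => x.
      by rewrite !inE => /orP [] ->; rewrite ?orbT.
    have := subset_leq_card sub; rewrite cards2 ab => h; exact: h.
    by move=> x y hx hy; rewrite leq_min hx hy.
  move=> E' /andP [_ /asboolP H]; rewrite leqNgt; apply/negP => hc.
  have := low R hc; move: H; lra.
Qed.
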